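(* Let $S$ and $T$ be semigroups such that for all $\mathcal{R}$-incomparable elements $u,v\in T$ there exist $a,b\in S$ and a homomorphism $\phi:S\to T$ with $a\phi=u$, $b\phi=v$ and $(aS\cap bS)\phi=uT\cap vT$. If $S$ is right ideal Howson then so is $T$.
   Context: A semigroup $S$ is right ideal Howson if the intersection of any two finitely generated right ideals of $S$ is finitely generated, where a right ideal $I$ is finitely generated if $I=XS^1$ for finite $X\subseteq I$ ($S^1$ is $S$ if $S$ is a monoid, otherwise $S$ with an identity adjoined). Elements $u,v\in T$ are $\mathcal{R}$-incomparable if $u\notin vT^1$ and $v\notin uT^1$. *)

(* Defs.v *)
From Stdlib Require Import List.

Definition associative_op {A : Type} (mul : A -> A -> A) : Prop :=
  forall x y z, mul x (mul y z) = mul (mul x y) z.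

Definition rmult {A : Type} (mul : A -> A -> A) (x : A) : A -> Prop :=
  fun y => exists s, y = mul x s.

Definition rmult1 {A : Type} (mul : A -> A -> A) (x : A) : A -> Prop :=
  fun y => y = x \/ rmult mul x y.

Definition is_right_ideal {A : Type} (mul : A -> A -> A) (I : A -> Prop) : Prop :=
  forall x s, I x -> I (mul x s).

Definition fg_right_ideal {A : Type} (mul : A -> A -> A) (I : A -> Prop) : Prop :=
  exists X : list A,
    (forall x, In x X -> I x) /\
    (forall y, I y <-> exists x, In x X /\ rmult1 mul x y).

Definition right_ideal_Howson {A : Type} (mul : A -> A -> A) : Prop :=
  forall I J : A -> Prop,
    fg_right_ideal mul I -> fg_right_ideal mul J ->
    fg_right_ideal mul (fun y => I y /\ J y).

Definition R_incomparable {A : Type} (mul : A -> A -> A) (u v : A) : Prop :=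
  ~ rmult1 mul v u /\ ~ rmult1 mul u v.

Definition is_hom {A B : Type} (mulA : A -> A -> A) (mulB : B -> B -> B)
  (phi : A -> B) : Prop :=
  forall x y, phi (mulA x y) = mulB (phi x) (phi y).

(* Main.v *)
Require Import Defs.
From Stdlib Require Import List Classical.

Section Gen.
Variable A : Type.
Variable mul : A -> A -> A.
Hypothesis assoc : associative_op mul.

Lemma r1_trans u x y : rmult1 mul u x -> rmult1 mul x y -> rmult1 mul u y.
Proof.
  intros [-> | [s ->]] [-> | [t ->]].
  - left; reflexivity.
  - right; exists t; reflexivity.
  - right; exists s; reflexivity.
  - right; exists (mul s t); rewrite assoc; reflexivity.
Qed.

Lemma fg_ext (I J : A -> Prop) : (forall y, I y <-> J y) -> fg_right_ideal mul I -> fg_right_ideal mul J.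
Proof.
  intros E [X [H1 H2]]; exists X; split.
  - intros x Hx; apply E, H1, Hx.
  - intros y; rewrite <- E; apply H2.
Qed.

Lemma fg_empty : fg_right_ideal mul (fun _ => False).
Proof.
  exists nil; split; [intros x [] | intros y; split; [intros [] | intros [x [[] _]]]].
Qed.

Lemma fg_union (I J : A -> Prop) : fg_right_ideal mul I -> fg_right_ideal mul J ->
  fg_right_ideal mul (fun y => I y \/ J y).
Proof.
  intros [X [H1 H2]] [Y [K1 K2]]; exists (X ++ Y); split.
  - intros x Hx; apply in_app_or in Hx; destruct Hx; [left; auto | right; auto].
  - intros y; split.
    + intros [Hy | Hy]; [apply H2 in Hy | apply K2 in Hy]; destruct Hy as [x [Hx Hr]];
      exists x; split; auto; apply in_or_app; auto.
    + intros [x [Hx Hr]]; apply in_app_or in Hx; destruct Hx;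
      [left; apply H2 | right; apply K2]; eauto.
Qed.

Lemma fg_principal a : fg_right_ideal mul (rmult1 mul a).
Proof.
  exists (a :: nil); split.
  - intros x [<- | []]; left; reflexivity.
  - intros y; split.
    + intros Hy; exists a; split; [left; reflexivity | exact Hy].
    + intros [x [[<- | []] Hr]]; exact Hr.
Qed.

Hypothesis Hpair : forall u v, fg_right_ideal mul (fun y => rmult1 mul u y /\ rmult1 mul v y).

Lemma howson_of_pair : right_ideal_Howson mul.
Proof.
  intros I J [X [H1 H2]] [Y [K1 K2]].
  assert (G : forall X', fg_right_ideal mul (fun z => exists x, In x X' /\ exists y, In y Y /\
             rmult1 mul x z /\ rmult1 mul y z)).
  { induction X' as [|x0 X' IH].
    - eapply fg_ext; [|apply fg_empty]; intros y; split; [intros [] | intros [x [[] _]]].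
    - assert (G2 : forall Y', fg_right_ideal mul (fun z => exists y, In y Y' /\
             rmult1 mul x0 z /\ rmult1 mul y z)).
      { induction Y' as [|y0 Y' IH2].
        - eapply fg_ext; [|apply fg_empty]; intros y; split; [intros [] | intros [x [[] _]]].
        - eapply fg_ext; [|apply (fg_union _ _ (Hpair x0 y0) IH2)].
          intros z; split.
          + intros [Hz | [y [Hy Hz]]]; [exists y0; split; [left; reflexivity | exact Hz]
              | exists y; split; [right; exact Hy | exact Hz]].
          + intros [y [[<- | Hy] Hz]]; [left; exact Hz | right; exists y; auto]. }
      eapply fg_ext; [|apply (fg_union _ _ (G2 Y) IH)].
      intros z; split.
      + intros [[y [Hy Hz]] | [x [Hx Hz]]];
        [exists x0; split; [left; reflexivity | exists y; auto]
        | exists x; split; [right; exact Hx | exact Hz]].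
      + intros [x [[<- | Hx] [y [Hy Hz]]]]; [left; exists y; auto | right; exists x; split; [exact Hx | exists y; auto]]. }
  eapply fg_ext; [|apply (G X)].
  intros z; split.
  - intros [x [Hx [y [Hy [Hxz Hyz]]]]]; split; [apply H2 | apply K2]; eauto.
  - intros [Iz Jz]; apply H2 in Iz; apply K2 in Jz.
    destruct Iz as [x [Hx Hxz]]; destruct Jz as [y [Hy Hyz]].
    exists x; split; [exact Hx | exists y; auto].
Qed.
End Gen.

Theorem mainTheorem19 (S T : Type) (mulS : S -> S -> S) (mulT : T -> T -> T)
  (assocS : associative_op mulS) (assocT : associative_op mulT)
  (H : forall u v : T, R_incomparable mulT u v ->
     exists (a b : S) (phi : S -> T),
       is_hom mulS mulT phi /\ phi a = u /\ phi b = v /\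
       (forall t : T,
          (exists s : S, rmult mulS a s /\ rmult mulS b s /\ phi s = t) <->
          (rmult mulT u t /\ rmult mulT v t))) :
  right_ideal_Howson mulS -> right_ideal_Howson mulT.
Proof.
  intros HS. apply howson_of_pair.
  intros u v.
  destruct (classic (rmult1 mulT v u)) as [Hvu | Hvu].
  { eapply fg_ext; [|apply (fg_principal _ mulT u)].
    intros y; split; [intros Hy; split; [exact Hy | eapply r1_trans; [exact assocT| exact Hvu | exact Hy]] | tauto]. }
  destruct (classic (rmult1 mulT u v)) as [Huv | Huv].
  { eapply fg_ext; [|apply (fg_principal _ mulT v)].
    intros y; split; [intros Hy; split; [eapply r1_trans; [exact assocT| exact Huv | exact Hy] | exact Hy] | tauto]. }
  destruct (H u v (conj Hvu Huv)) as [a [b [phi [Hom [Ha [Hb Hiff]]]]]].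
  destruct (HS _ _ (fg_principal _ mulS a) (fg_principal _ mulS b)) as [X [X1 X2]].
  assert (Hba : ~ rmult1 mulS b a).
  { intros [E | [s E]]; apply Hvu; [left; rewrite <- Ha, <- Hb, E; reflexivity |
      right; exists (phi s); rewrite <- Ha, <- Hb, E, Hom; reflexivity]. }
  assert (Hab : ~ rmult1 mulS a b).
  { intros [E | [s E]]; apply Huv; [left; rewrite <- Ha, <- Hb, E; reflexivity |
      right; exists (phi s); rewrite <- Ha, <- Hb, E, Hom; reflexivity]. }
  assert (Gen : forall x0, In x0 X -> rmult mulT u (phi x0) /\ rmult mulT v (phi x0)).
  { intros x0 Hx0. destruct (X1 x0 Hx0) as [[E | Ra] [E' | Rb]].
    - exfalso; apply Hab; left; congruence.
    - exfalso; apply Hba; subst x0; right; exact Rb.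
    - exfalso; apply Hab; subst x0; right; exact Ra.
    - apply Hiff; exists x0; auto. }
  exists (map phi X); split.
  - intros x Hx; apply in_map_iff in Hx; destruct Hx as [x0 [<- Hx0]].
    destruct (Gen x0 Hx0); split; right; assumption.
  - intros y; split.
    + intros [[Ey | Ry] [Ey' | Ry']].
      * exfalso; apply Hvu; left; congruence.
      * exfalso; apply Hvu; subst y; right; exact Ry'.
      * exfalso; apply Huv; subst y; right; exact Ry.
      * destruct (proj2 (Hiff y) (conj Ry Ry')) as [s [Rs [Rs' <-]]].
        destruct (proj1 (X2 s) (conj (or_intror Rs) (or_intror Rs'))) as [x0 [Hx0 [E | [s' E]]]].
        -- exists (phi x0); split; [apply in_map; exact Hx0 | left; congruence].
        -- exists (phi x0); split; [apply in_map; exact Hx0 | right; exists (phi s'); rewrite E, Hom; reflexivity].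
    + intros [x [Hx Hr]]; apply in_map_iff in Hx; destruct Hx as [x0 [<- Hx0]].
      destruct (Gen x0 Hx0) as [G1 G2]; split; eapply r1_trans; eauto; right; eauto.
Qed.
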